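(* Let $\mathsf V$ be a 1ESP variety and $h$ an algebraic e-generalization problem for $\mathsf V$. Then a homomorphism $g:\mathbf F_{\mathsf V}(z)\to\mathbf P$, with $\mathbf P$ finitely generated and projective in $\mathsf V$, is a solution of $h$ if and only if $\ker(g)\in\mathscr G(h)$.
   Context: $\mathbf F_{\mathsf V}(z)$ is the free algebra of the variety $\mathsf V$ on one generator $z$. An algebra is projective in $\mathsf V$ iff it is a retract of a free algebra of $\mathsf V$; exact in $\mathsf V$ if isomorphic to a finitely generated subalgebra of a finitely generated free algebra of $\mathsf V$. An algebra $\mathbf S$ is strongly projective in $\mathsf V$ if it is projective and, whenever $i:\mathbf S\to\mathbf P$ is an embedding into a projective algebra $\mathbf P$, there is a homomorphism $j:\mathbf P\to\mathbf S$ with $j\circ i=\mathrm{id}_{\mathbf S}$. $\mathsf V$ is 1ESP if every 1-generated exact algebra in $\mathsf V$ is strongly projective. An algebraic e-generalization problem is a homomorphism $h:\mathbf F_{\mathsf V}(z)\to\prod_{k=1}^m\mathbf E_k$ with each $\mathbf E_k$ 1-generated exact and each $p_k\circ h$ surjective. A solution of $h$ is a homomorphism $g:\mathbf F_{\mathsf V}(z)\to\mathbf P$, $\mathbf P$ finitely generated projective, with $f\circ g=h$ for some homomorphism $f:\mathbf P\to\prod_k\mathbf E_k$. $\mathscr G(h)=\{\ker(g): g\text{ a solution of } h\}$. *)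

(* Defs.v *)
From mathcomp Require Import all_boot.
Set Implicit Arguments. Unset Strict Implicit. Unset Printing Implicit Defensive.

Record signature := Signature { op : Type; arity : op -> nat }.
Arguments arity {s} o.

Record algebra (S : signature) := Algebra {
  carrier :> Type;
  interp : forall o : op S, ('I_(arity o) -> carrier) -> carrier }.
Arguments interp {S} a o _.

Section UA.
Variable S : signature.

Definition hom (A B : algebra S) (f : A -> B) : Prop :=
  forall (o : op S) (args : 'I_(arity o) -> A),
    f (interp A o args) = interp B o (fun i => f (args i)).

Definition embedding (A B : algebra S) (f : A -> B) : Prop :=
  hom f /\ injective f.

Inductive term (X : Type) : Type :=
| Var : X -> term X
| App : forall o : op S, ('I_(arity o) -> term X) -> term X.

Fixpoint eval (X : Type) (A : algebra S) (v : X -> A) (t : term X) : A :=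
  match t with
  | Var x => v x
  | App o ts => interp A o (fun i => eval v (ts i))
  end.

Record variety := Variety { identities : term nat * term nat -> Prop }.

Definition satisfies (A : algebra S) (e : term nat * term nat) : Prop :=
  forall v : nat -> A, eval v e.1 = eval v e.2.

Definition in_V (V : variety) (A : algebra S) : Prop :=
  forall e, identities V e -> satisfies A e.

Inductive generated (A : algebra S) (G : A -> Prop) : A -> Prop :=
| gen_base : forall a, G a -> generated G a
| gen_op : forall (o : op S) (args : 'I_(arity o) -> A),
    (forall i, generated G (args i)) -> generated G (interp A o args).

Definition fin_generated (A : algebra S) : Prop :=
  exists (n : nat) (gs : 'I_n -> A),
    forall a, generated (fun x => exists i, gs i = x) a.

Definition one_generated (A : algebra S) : Prop :=
  exists g : A, forall a, generated (fun x => x = g) a.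

Definition is_free (V : variety) (X : Type) (A : algebra S) (e : X -> A) : Prop :=
  in_V V A /\
  forall (B : algebra S), in_V V B -> forall f : X -> B,
    (exists h : A -> B, hom h /\ forall x, h (e x) = f x) /\
    (forall h1 h2 : A -> B, hom h1 -> hom h2 ->
       (forall x, h1 (e x) = f x) -> (forall x, h2 (e x) = f x) ->
       forall a, h1 a = h2 a).

Definition retract (A B : algebra S) : Prop :=
  exists (s : A -> B) (r : B -> A), hom s /\ hom r /\ forall a, r (s a) = a.

Definition projective (V : variety) (A : algebra S) : Prop :=
  in_V V A /\
  exists (X : Type) (F : algebra S) (e : X -> F), is_free V e /\ retract A F.

(* Exact in V: isomorphic to a finitely generated subalgebra of a finitely
   generated free algebra of V (free on a finite set 'I_n), i.e. A is
   finitely generated and embeds into such a free algebra. *)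
Definition exact (V : variety) (A : algebra S) : Prop :=
  in_V V A /\ fin_generated A /\
  exists (n : nat) (F : algebra S) (e : 'I_n -> F),
    is_free V e /\ exists i : A -> F, embedding i.

Definition strongly_projective (V : variety) (A : algebra S) : Prop :=
  projective V A /\
  forall (P : algebra S) (i : A -> P), projective V P -> embedding i ->
    exists j : P -> A, hom j /\ forall a, j (i a) = a.

Definition one_ESP (V : variety) : Prop :=
  forall A : algebra S, exact V A -> one_generated A -> strongly_projective V A.

Definition prod_alg (m : nat) (E : 'I_m -> algebra S) : algebra S :=
  @Algebra S (forall k : 'I_m, E k)
    (fun o args => fun k => interp (E k) o (fun i => args i k)).

Definition kernel (A B : algebra S) (f : A -> B) : A -> A -> Prop :=
  fun x y => f x = f y.

Definition e_gen_problem (V : variety) (F : algebra S) (m : nat)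
    (E : 'I_m -> algebra S) (h : F -> prod_alg E) : Prop :=
  hom h /\
  (forall k, exact V (E k) /\ one_generated (E k)) /\
  (forall k (y : E k), exists x : F, h x k = y).

Definition solution (V : variety) (F : algebra S) (m : nat)
    (E : 'I_m -> algebra S) (h : F -> prod_alg E)
    (P : algebra S) (g : F -> P) : Prop :=
  hom g /\ fin_generated P /\ projective V P /\
  exists f : P -> prod_alg E, hom f /\ forall x, f (g x) = h x.

(* G(h) = { ker g | g a solution of h }, as a predicate on relations of F. *)
Definition sol_kernels (V : variety) (F : algebra S) (m : nat)
    (E : 'I_m -> algebra S) (h : F -> prod_alg E) (theta : F -> F -> Prop) : Prop :=
  exists (P : algebra S) (g : F -> P), solution V h g /\ theta = kernel g.

End UA.

(* Main.v *)
Require Import Defs.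
From mathcomp Require Import all_boot.
From Stdlib Require Import ClassicalEpsilon ProofIrrelevance FunctionalExtensionality Classical List.
Set Implicit Arguments. Unset Strict Implicit.

Definition closedP (S : signature) (B : algebra S) (Q : B -> Prop) :=
  forall o (args : 'I_(arity o) -> B), (forall i, Q (args i)) -> Q (interp B o args).

Definition subalg (S : signature) (B : algebra S) (Q : B -> Prop) (HQ : closedP Q) : algebra S :=
  @Algebra S (sig Q) (fun o args => exist Q (interp B o (fun i => proj1_sig (args i)))
                                           (HQ o _ (fun i => proj2_sig (args i)))).

Lemma sig_eq (T : Type) (Q : T -> Prop) (a b : sig Q) : proj1_sig a = proj1_sig b -> a = b.
Proof. case: a b => [a pa] [b pb] /= E; subst b; by rewrite (proof_irrelevance _ pa pb). Qed.

Lemma eval_sub (S : signature) (B : algebra S) (Q : B -> Prop) (HQ : closedP Q)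
  (v : nat -> subalg HQ) (t : term S nat) :
  proj1_sig (eval v t) = eval (fun n => proj1_sig (v n)) t.
Proof.
elim: t => [x|o ts IH] //=.
f_equal; apply: functional_extensionality => i; exact: IH.
Qed.

Lemma in_V_sub (S : signature) (V : variety S) (B : algebra S) (Q : B -> Prop) (HQ : closedP Q) :
  in_V V B -> in_V V (subalg HQ).
Proof.
move=> HB e He v; apply: sig_eq; rewrite !eval_sub; exact: HB.
Qed.

Lemma hom_val (S : signature) (B : algebra S) (Q : B -> Prop) (HQ : closedP Q) :
  hom (fun a : subalg HQ => proj1_sig a).
Proof. by []. Qed.

Lemma gen_closed (S : signature) (B : algebra S) (G : B -> Prop) : closedP (generated G).
Proof. move=> o args H; exact: gen_op. Qed.

Lemma hom_comp (S : signature) (A B C : algebra S) (f : A -> B) (g : B -> C) :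
  hom f -> hom g -> hom (fun a => g (f a)).
Proof. move=> hf hg o args; by rewrite hf hg. Qed.

Lemma free_generated (S : signature) (V : variety S) (X : Type) (A : algebra S) (e : X -> A) :
  is_free V e -> forall a, generated (fun y => exists x, e x = y) a.
Proof.
move=> [HA HF] a.
set G := (fun y => exists x, e x = y).
pose Sb := subalg (@gen_closed S A G).
have HSb : in_V V Sb by apply: in_V_sub.
pose e' := fun x => exist (generated G) (e x) (gen_base (ex_intro _ x erefl)) : Sb.
have [[h [hh he]] _] := HF Sb HSb e'.
have [_ U] := HF A HA e.
have E : proj1_sig (h a) = a.
  apply: (U (fun a => proj1_sig (h a)) id) => //.
  - apply: hom_comp => //; exact: hom_val.
  - by move=> x; rewrite he.
rewrite -E; exact: proj2_sig.
Qed.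

Lemma generated_trans (S : signature) (A : algebra S) (G G' : A -> Prop) a :
  (forall x, G x -> generated G' x) -> generated G a -> generated G' a.
Proof. move=> H; elim => [x /H //|o args _ IH]; exact: gen_op. Qed.

Lemma generated_hom (S : signature) (A B : algebra S) (G : A -> Prop) (G' : B -> Prop) (f : A -> B) a :
  hom f -> (forall x, G x -> generated G' (f x)) -> generated G a -> generated G' (f a).
Proof. move=> hf H; elim => [x /H //|o args _ IH]; rewrite hf; exact: gen_op. Qed.

Lemma fin_union (X : Type) k (L : 'I_k -> list X) : exists l, forall i x, In x (L i) -> In x l.
Proof.
elim: k L => [|k IH] L.
  exists nil; move=> i; case: i => m Hm; by [].
have [l Hl] := IH (fun j => L (lift ord0 j)).
exists (L ord0 ++ l) => i x Hx; apply/in_or_app.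
move: Hx; case: (unliftP ord0 i) => [j ->|->] Hx; [right; exact: Hl Hx | by left].
Qed.

Lemma fin_support (S : signature) (X : Type) (A : algebra S) (e : X -> A) a :
  generated (fun y => exists x, e x = y) a ->
  exists l, generated (fun y => exists x, In x l /\ e x = y) a.
Proof.
elim => [y [x <-]|o args _ IH].
  exists (x :: nil); apply: gen_base; exists x; split => //; by left.
pose L i := proj1_sig (constructive_indefinite_description _ (IH i)).
have HL i : generated (fun y => exists x, In x (L i) /\ e x = y) (args i)
  := proj2_sig (constructive_indefinite_description _ (IH i)).
have [l Hl] := fin_union L.
exists l; apply: gen_op => i; apply: generated_trans (HL i) => y [x [Hx <-]].
apply: gen_base; exists x; split => //; exact: Hl Hx.
Qed.

Lemma dedup (X : Type) (l : list X) : exists n (gens : 'I_n -> X),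
  injective gens /\ forall x, In x l -> exists i, gens i = x.
Proof.
elim: l => [|x l [n [gens [Hi Hl]]]].
  exists 0, (fun i : 'I_0 => match Bool.diff_true_false (etrans (esym (ltn_ord i)) (ltn0 i)) with end); split => [[]//|x []].
case: (classic (exists i, gens i = x)) => Hx.
  exists n, gens; split => // y [<-|/Hl //]; exact: Hx.
exists n.+1, (fun i : 'I_n.+1 => if unlift ord0 i is Some j then gens j else x); split.
  move=> i j /=.
  case: (unliftP ord0 i) => [i' ->|->]; case: (unliftP ord0 j) => [j' ->|->] //.
  - by move/Hi ->.
  - by move=> E; case: Hx; exists i'.
  - by move=> E; case: Hx; exists j'.
move=> y [<-|/Hl [i <-]].
  by exists ord0; rewrite unlift_none.
by exists (lift ord0 i); rewrite liftK.
Qed.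

Definition Gset (S : signature) (X : Type) (A : algebra S) (e : X -> A) n (gens : 'I_n -> X) :=
  fun y => exists i, e (gens i) = y.

Definition subgen (S : signature) (X : Type) (A : algebra S) (e : X -> A) n (gens : 'I_n -> X) :=
  subalg (@gen_closed S A (Gset e gens)).

Definition subgen_e (S : signature) (X : Type) (A : algebra S) (e : X -> A) n (gens : 'I_n -> X)
  (i : 'I_n) : subgen e gens :=
  exist _ (e (gens i)) (gen_base (ex_intro _ i erefl)).

Lemma free_sub (S : signature) (V : variety S) (X : Type) (A : algebra S) (e : X -> A)
  (HF : is_free V e) n (gens : 'I_n -> X) (Hi : injective gens) :
  is_free V (subgen_e e gens).
Proof.
have [HA HU] := HF.
split; first exact: in_V_sub.
move=> B HB f; split.
- case: (classic (inhabited B)) => [[b0]|nB].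
  + pose f' x := match excluded_middle_informative (exists i, gens i = x) with
                 | left H => f (proj1_sig (constructive_indefinite_description _ H))
                 | right _ => b0 end.
    have f'E i : f' (gens i) = f i.
      rewrite /f'; case: excluded_middle_informative => [H|[]]; last by exists i.
      by case: constructive_indefinite_description => j /= /Hi ->.
    have [[H [hH eH]] _] := HU B HB f'.
    exists (fun a : subgen e gens => H (proj1_sig a)); split.
    * apply: hom_comp => //; exact: hom_val.
    * by move=> i /=; rewrite eH f'E.
  + have inh : forall a, generated (Gset e gens) a -> inhabited B.
      move=> a; elim => [y [i _]|o args _ IH]; first exact: inhabits (f i).
      case: (classic (exists i : 'I_(arity o), True)) => [[i _]|N]; first exact: IH i.
      constructor; apply: (interp B o) => i; case: N; by exists i.
    exists (fun a : subgen e gens => False_rect B (nB (inh _ (proj2_sig a)))); split.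
    * move=> o args; case: nB; exact: inh _ (proj2_sig (interp (subgen e gens) o args)).
    * move=> i; case: nB; exact: inhabits (f i).
- move=> h1 h2 hh1 hh2 E1 E2 [a pa].
  elim: a / pa (pa) => [y [i <-]|o args Hargs IH] pa.
    have -> : exist _ (e (gens i)) pa = subgen_e e gens i by apply: sig_eq.
    by rewrite E1 E2.
  have -> : exist _ (interp A o args) pa =
     interp (subgen e gens) o (fun i => exist _ (args i) (Hargs i)) by apply: sig_eq.
  rewrite hh1 hh2; f_equal; apply: functional_extensionality => i; exact: IH.
Qed.

Theorem theorem4p12 (S : signature) (V : variety S) (HV : one_ESP V)
  (F : algebra S) (z : F) (HF : is_free V (fun _ : unit => z))
  (m : nat) (E : 'I_m -> algebra S) (h : F -> prod_alg E)
  (Hh : e_gen_problem V h)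
  (P : algebra S) (g : F -> P) (Hg : hom g)
  (HPfg : fin_generated P) (HPproj : projective V P) :
  solution V h g <-> sol_kernels V h (kernel g).
Proof.
split; first by move=> Hs; exists P, g.
move=> [P' [g' [[Hg' [_ [_ [f' [hf' Ef']]]]] Ek]]].
have kerimp x y : g x = g y -> h x = h y.
  move=> Exy; have : kernel g x y by [].
  by rewrite Ek /kernel -!Ef' => ->.
have hh : hom h := Hh.1.
pose Q := fun p : P => exists x, g x = p.
have HQ : closedP Q.
  move=> o args Ha.
  pose xs i := proj1_sig (constructive_indefinite_description _ (Ha i)).
  exists (interp F o xs); rewrite Hg; f_equal; apply: functional_extensionality => i.
  exact: (proj2_sig (constructive_indefinite_description _ (Ha i))).
pose A := subalg HQ.
have Fgen : forall x, generated (fun y => y = z) x.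
  move=> x; apply: generated_trans (free_generated HF x) => y [_ <-]; exact: gen_base.
pose az : A := exist Q (g z) (ex_intro _ z erefl).
have Agen : forall a : A, generated (fun b => b = az) a.
  have H x : generated (fun b => b = az) (exist Q (g x) (ex_intro _ x erefl) : A).
    elim: (Fgen x) => [y ->|o args _ IH]; first exact: gen_base.
    have -> : (exist Q (g (interp F o args)) (ex_intro _ _ erefl) : A) =
      interp A o (fun i => exist Q (g (args i)) (ex_intro _ _ erefl)).
      by apply: sig_eq => /=; rewrite Hg.
    exact: gen_op.
  move=> [p [x Hx]]; subst p; exact: H.
have [HPV [X [FX [e [HFX [s [r [hs [hr rs]]]]]]]]] := HPproj.
have [l Hl] := fin_support (free_generated HFX (s (g z))).
have [n [gens [Hi Hgens]]] := dedup l.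
have sA : forall a : A, generated (Gset e gens) (s (proj1_sig a)).
  move=> [p Hp] /=; case: Hp => x <-.
  apply: (@generated_hom S F FX (fun y => y = z) (Gset e gens) (fun x => s (g x)) x); [exact: hom_comp | | exact: Fgen].
  move=> y ->; apply: generated_trans Hl => y' [x' [Hx' <-]].
  have [i <-] := Hgens _ Hx'; apply: gen_base; by exists i.
have exA : exact V A.
  split; first exact: in_V_sub.
  split; first by exists 1, (fun _ => az) => a; apply: generated_trans (Agen a) => b ->; apply: gen_base; exists ord0.
  exists n, (subgen e gens), (subgen_e e gens); split; first exact: free_sub.
  exists (fun a => exist _ (s (proj1_sig a)) (sA a) : subgen e gens); split.
    by move=> o args; apply: sig_eq => /=; rewrite hs.
  move=> a b /(f_equal (fun c => r (proj1_sig c))) /=; rewrite !rs; exact: sig_eq.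
have [_ SP] := HV A exA (ex_intro _ az Agen).
have [j [hj ji]] := SP P (fun a => proj1_sig a) HPproj (conj (@hom_val _ _ _ HQ) (fun a b => @sig_eq _ _ a b)).
pose f0 (a : A) := h (proj1_sig (constructive_indefinite_description _ (proj2_sig a))).
have f0E x (a : A) : g x = proj1_sig a -> f0 a = h x.
  move=> Ex; rewrite /f0; case: constructive_indefinite_description => y /= Ey.
  apply: kerimp; by rewrite Ey.
have hf0 : hom f0.
  move=> o args.
  pose xs i := proj1_sig (constructive_indefinite_description _ (proj2_sig (args i))).
  rewrite (f0E (interp F o xs)).
    rewrite hh; f_equal.
  rewrite Hg /=; f_equal; apply: functional_extensionality => i.
  exact: (proj2_sig (constructive_indefinite_description _ (proj2_sig (args i)))).
split => //; split => //; split => //.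
exists (fun p => f0 (j p)); split; first exact: hom_comp.
move=> x; apply: f0E.
have -> : g x = proj1_sig (exist Q (g x) (ex_intro _ x erefl) : A) by [].
by rewrite ji.
Qed.
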